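(* Let $M\in\mathbb{R}^{(\ell+1)\times(\ell+1)}$ have all entries nonnegative, $\lambda\in\mathbb{R}$, and $x\in\mathbb{R}^{\ell+1}$ with all entries strictly positive, such that $Mx=\lambda x$. Let $\overline{L}:=\lambda I_\ell-\overline{M}$. (i) Then $\lambda\ge0$ and $\overline{M}\,\overline{x}\le\lambda\overline{x}$ entrywise; consequently $\overline{L}\,\overline{x}\ge0$. (ii) If moreover the last column of $M$ has all entries strictly positive, then $\overline{M}\,\overline{x}<\lambda\overline{x}$ entrywise, and consequently $\overline{L}$ is a nonsingular $M$-matrix. (iii) Let $t$ be a positive integer and $\overline{y}:=\sum_{k=0}^{t-1}\overline{M}^k\overline{x}$. Then $\overline{y}$ has all entries strictly positive. If moreover the last column of $\sum_{k=0}^{t-1}M^k$ has all entries strictly positive, then $\overline{M}\,\overline{y}<\lambda\overline{y}$ entrywise, and consequently $\overline{L}$ is a nonsingular $M$-matrix.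
   Context: For $x\in\mathbb{R}^{\ell+1}$, $\overline{x}\in\mathbb{R}^\ell$ denotes $x$ with its last coordinate removed; for $M\in\mathbb{R}^{(\ell+1)\times(\ell+1)}$, $\overline{M}\in\mathbb{R}^{\ell\times\ell}$ denotes $M$ with its last row and last column removed. Inequalities $u\le v$ (resp. $u<v$) between vectors are entrywise. A matrix $Q\in\mathbb{R}^{\ell\times\ell}$ with nonpositive off-diagonal entries is a nonsingular $M$-matrix if it is invertible and $Q^{-1}$ has all entries nonnegative. *)

(* Defs.v *)
From HB Require Import structures.
From mathcomp Require Import all_boot all_order all_algebra.
Set Implicit Arguments. Unset Strict Implicit. Unset Printing Implicit Defensive.
Import Order.TTheory GRing.Theory Num.Theory.
Local Open Scope ring_scope.

Definition trunc_mx (R : Type) (l : nat) (M : 'M[R]_l.+1) : 'M[R]_l :=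
  \matrix_(i < l, j < l) M (widen_ord (leqnSn l) i) (widen_ord (leqnSn l) j).

Definition trunc_cv (R : Type) (l : nat) (x : 'cV[R]_l.+1) : 'cV[R]_l :=
  \col_(i < l) x (widen_ord (leqnSn l) i) 0.

Definition mx_le (R : numDomainType) (m n : nat) (A B : 'M[R]_(m, n)) : Prop :=
  forall i j, A i j <= B i j.
Definition mx_lt (R : numDomainType) (m n : nat) (A B : 'M[R]_(m, n)) : Prop :=
  forall i j, A i j < B i j.

Definition nonsingular_M_matrix (R : numFieldType) (n : nat) (Q : 'M[R]_n) : Prop :=
  [/\ forall i j, i != j -> Q i j <= 0,
      Q \in unitmx &
      forall i j, 0 <= invmx Q i j].

(* Main.v *)
Require Import Defs.
From HB Require Import structures.
From mathcomp Require Import all_boot all_order all_algebra.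
From mathcomp Require Import ring lra.
Import Order.TTheory GRing.Theory Num.Theory.
Local Open Scope ring_scope.

Lemma Zmx_nonneg (R : realFieldType) (n : nat) (Q : 'M[R]_n) (v u : 'cV[R]_n) :
  (forall i j, i != j -> Q i j <= 0) -> (forall i, 0 < v i 0) ->
  (forall i, 0 < (Q *m v) i 0) -> (forall i, 0 <= (Q *m u) i 0) ->
  forall i, 0 <= u i 0.
Proof.
move=> HQ Hv HQv HQu k; rewrite leNgt; apply/negP => Hk.
pose F := fun j => u j 0 / v j 0.
have [i _ Hi] := Order.TotalTheory.arg_minP F (i0 := k) (P := predT) isT.
set mu := F i in Hi.
have Hmu : mu < 0.
  apply: (le_lt_trans (Hi k isT)); rewrite /F pmulr_llt0 ?invr_gt0 //.
pose w := u - mu *: v.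
have Hw : forall j, 0 <= w j 0.
  move=> j; rewrite !mxE subr_ge0.
  have := Hi j isT; rewrite /F /mu -/(F i) ler_pdivlMr //.
have Hwi : w i 0 = 0.
  rewrite !mxE /mu /F /= mulrC mulrCA divff ?mulr1 ?subrr //.
  by apply/lt0r_neq0.
have H1 : 0 < (Q *m w) i 0.
  rewrite mulmxBr -scalemxAr !mxE.
  have := HQu i; have := HQv i; rewrite !mxE; nra.
have H2 : (Q *m w) i 0 <= 0.
  rewrite mxE; apply: sumr_le0 => j _.
  have [->|ne] := eqVneq j i; first by rewrite Hwi mulr0.
  by apply: mulr_le0_ge0; [apply: HQ; rewrite eq_sym|apply: Hw].
by have := lt_le_trans H1 H2; rewrite ltxx.
Qed.

Lemma Zmx_Mmatrix (R : realFieldType) (n : nat) (Q : 'M[R]_n) (v : 'cV[R]_n) :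
  (forall i j, i != j -> Q i j <= 0) -> (forall i, 0 < v i 0) ->
  (forall i, 0 < (Q *m v) i 0) -> nonsingular_M_matrix Q.
Proof.
move=> HQ Hv HQv.
have Hunit : Q \in unitmx.
  rewrite -unitmx_tr -row_free_unit -kermx_eq0; apply/eqP.
  set K := kermx Q^T.
  have HK : K *m Q^T = 0 by apply/sub_kermxP.
  apply/row_matrixP => i; rewrite row0.
  set r := row i K.
  have Hr : Q *m r^T = 0.
    by apply: trmx_inj; rewrite trmx_mul trmxK trmx0 /r -row_mul HK row0.
  have Hp := @Zmx_nonneg _ _ Q v (r^T) HQ Hv HQv.
  have Hn := @Zmx_nonneg _ _ Q v (- r^T) HQ Hv HQv.
  have a := Hp (fun k => ltac:(by rewrite Hr mxE lexx)).
  have b := Hn (fun k => ltac:(by rewrite mulmxN Hr oppr0 mxE lexx)).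
  apply/rowP => j; have := a j; have := b j.
  rewrite !mxE; lra.
split => // i j.
have := @Zmx_nonneg _ _ Q v (invmx Q *m delta_mx j 0) HQ Hv HQv.
rewrite mulmxA mulmxV // mul1mx.
move=> /(_ _ i).
have -> : (invmx Q *m delta_mx j (0 : 'I_1)) i 0 = invmx Q i j.
  rewrite mxE (bigD1 j) //= !mxE eqxx mulr1 big1 ?addr0 // => k nk.
  by rewrite !mxE (negbTE nk) mulr0.
apply => k; rewrite !mxE; case: (_ == _); case: (_ == _) => //.
Qed.
Lemma mulE (R : pzSemiRingType) n (A B : 'M[R]_n) : A * B = A *m B.
Proof. by rewrite mulmxE. Qed.

Lemma nn_mul (R : numDomainType) m n p (A : 'M[R]_(m, n)) (B : 'M[R]_(n, p)) :
  (forall i j, 0 <= A i j) -> (forall i j, 0 <= B i j) -> forall i j, 0 <= (A *m B) i j.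
Proof. by move=> HA HB i j; rewrite mxE sumr_ge0 // => k _; rewrite mulr_ge0. Qed.

Lemma nn_exp (R : numDomainType) n (A : 'M[R]_n) :
  (forall i j, 0 <= A i j) -> forall k i j, 0 <= (A ^+ k) i j.
Proof.
move=> HA; elim=> [|k IH] i j; first by rewrite expr0 mxE ler0n.
by rewrite exprS mulE nn_mul.
Qed.

Lemma hit (R : realFieldType) (l : nat) (M : 'M[R]_l.+1) (t : nat) (i : 'I_l) :
 (forall i j, 0 <= M i j) ->
 0 < (\sum_(k < t) M ^+ k) (widen_ord (leqnSn l) i) ord_max ->
 0 < (\sum_(k < t) trunc_mx M ^+ k *m \col_j M (widen_ord (leqnSn l) j) ord_max) i 0.
Proof.
move=> HM.
set w := widen_ord (leqnSn l).
set Mb := trunc_mx M.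
set c := \col_j M (w j) ord_max.
pose S k := \sum_(j < k) Mb ^+ j *m c.
pose C k := \sum_(m < k) (M ^+ m) ord_max ord_max.
have HMb : forall i j, 0 <= Mb i j by move=> a b; rewrite mxE.
have Hc : forall i j, 0 <= c i j by move=> a b; rewrite mxE.
have HC : forall k, 0 <= C k by move=> k; apply: sumr_ge0 => m _; apply: nn_exp.
have HCS : forall k, C k <= C k.+1.
  by move=> k; rewrite /C big_ord_recr /= lerDl nn_exp.
have HS0 : forall k j, 0 <= S k j 0.
  move=> k j; rewrite /S summxE; apply: sumr_ge0 => m _.
  by apply: nn_mul => //; apply: nn_exp.
have HSrec : forall k j, S k.+1 j 0 = c j 0 + \sum_(q < l) Mb j q * S k q 0.
  move=> k j; rewrite /S big_ord_recl expr0 mul1mx mxE; congr (_ + _).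
  rewrite summxE; under eq_bigr => m _ do rewrite exprS mulE -mulmxA mxE.
  rewrite exchange_big /=; apply: eq_bigr => q _.
  by rewrite summxE mulr_sumr.
have HSmono : forall k d j, S k j 0 <= S (k + d)%N j 0.
  move=> k; elim=> [|d IH] j; first by rewrite addn0.
  apply: (le_trans (IH j)); rewrite addnS /S big_ord_recr /= mxE lerDl.
  by apply: nn_mul => //; apply: nn_exp.
have Hinv : forall k j, (M ^+ k) (w j) ord_max <= C k * S k j 0.
  elim=> [|k IH] j.
    rewrite expr0 mxE /C big_ord0 mul0r.
    suff -> : (w j == ord_max) = false by [].
    by rewrite -val_eqE /= ltn_eqF.
  rewrite exprS mulE mxE big_ord_recr /= HSrec.
  have E1 : \sum_(q < l) M (w j) (w q) * (M ^+ k) (w q) ord_max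
            <= C k.+1 * \sum_(q < l) Mb j q * S k q 0.
    rewrite mulr_sumr; apply: ler_sum => q _.
    rewrite [Mb j q]mxE.
    have h1 := IH q; have h2 := HM (w j) (w q); have h3 := HCS k.
    have h4 := HS0 k q; have h5 := HC k.
    rewrite mulrCA; apply: ler_wpM2l => //.
    apply: (le_trans h1); exact: ler_wpM2r.
  have E2 : M (w j) ord_max * (M ^+ k) ord_max ord_max <= C k.+1 * c j 0.
    rewrite [c j 0]mxE mulrC; apply: ler_wpM2r; first exact: HM.
    by rewrite /C big_ord_recr /= lerDr; apply: HC.
  rewrite mulrDr addrC; exact: lerD.
move=> Hpos; rewrite ltNge; apply/negP => Hle.
move: Hpos; rewrite summxE ltNge; apply/negP/negPn.
apply: sumr_le0 => k _.
apply: (le_trans (Hinv k i)).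
have Hkt : (k + (t - k) = t)%N by rewrite subnKC // ltnW.
have := HSmono k (t - k)%N i; rewrite Hkt -/(S t) => h.
have h2 := HC k; have h3 := HS0 k i.
have Hle2 : S t i 0 <= 0 by exact: Hle.
nra.
Qed.

Lemma entB (R : pzRingType) m (a : R) (u A : 'cV[R]_m) i :
  (a *: u - A) i 0 = a * u i 0 - A i 0.
Proof. by rewrite !mxE. Qed.

Theorem proposition6p7 (R : realFieldType) (l : nat)
    (M : 'M[R]_l.+1) (lambda : R) (x : 'cV[R]_l.+1) :
  (forall i j, 0 <= M i j) ->
  (forall i, 0 < x i 0) ->
  M *m x = lambda *: x ->
  let Mb := trunc_mx M in
  let xb := trunc_cv x in
  let Lb := lambda%:M - Mb in
  (* (i) *)
  [/\ 0 <= lambda, mx_le (Mb *m xb) (lambda *: xb) & mx_le 0 (Lb *m xb)]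
  /\
  (* (ii) *)
  ((forall i, 0 < M i ord_max) ->
     mx_lt (Mb *m xb) (lambda *: xb) /\ nonsingular_M_matrix Lb)
  /\
  (* (iii) *)
  (forall t : nat, (0 < t)%N ->
     let yb := \sum_(k < t) (Mb ^+ k *m xb) in
     (forall i, 0 < yb i 0) /\
     ((forall i, 0 < (\sum_(k < t) M ^+ k) i ord_max) ->
        mx_lt (Mb *m yb) (lambda *: yb) /\ nonsingular_M_matrix Lb)).
Proof.
move=> HM Hx HMx Mb xb Lb.
set w := widen_ord (leqnSn l).
set c := \col_j M (w j) ord_max.
have Hxb : forall i, 0 < xb i 0 by move=> i; rewrite mxE.
have HMb : forall i j, 0 <= Mb i j by move=> a b; rewrite mxE.
have K1 : forall i, (Mb *m xb) i 0 + c i 0 * x ord_max 0 = lambda * xb i 0.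
  move=> i; have := congr1 (fun A : 'M[R]_(l.+1,1) => A (w i) 0) HMx; rewrite /= !mxE big_ord_recr /=.
  move=> <-; congr (_ + _); apply: eq_bigr => j _; by rewrite !mxE.
have Hlam : 0 <= lambda.
  have := congr1 (fun A : 'M[R]_(l.+1,1) => A ord_max 0) HMx; rewrite /= !mxE => E.
  have : 0 <= lambda * x ord_max 0.
    by rewrite -E sumr_ge0 // => j _; rewrite mulr_ge0 // ltW.
  have := Hx ord_max; nra.
have LbE : forall u : 'cV_l, Lb *m u = lambda *: u - Mb *m u.
  by move=> u; rewrite /Lb mulmxBl mul_scalar_mx.
have Hoff : forall i j, i != j -> Lb i j <= 0.
  by move=> i j ne; rewrite !mxE (negbTE ne) mulr0n sub0r oppr_le0.
have Hcx : forall i, 0 <= c i 0 * x ord_max 0.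
  by move=> i; rewrite mulr_ge0 // ?mxE // ltW.
split; [|split].
- split => // i j; rewrite (ord1 j).
    move: (K1 i) (Hcx i) => h1 h2; rewrite [X in _ <= X]mxE; lra.
  move: (K1 i) (Hcx i) => h1 h2; rewrite LbE entB mxE; lra.
- move=> Hpos.
  have Hlt : mx_lt (Mb *m xb) (lambda *: xb).
    move=> i j; rewrite (ord1 j) [X in _ < X]mxE.
    have : 0 < c i 0 * x ord_max 0 by rewrite mulr_gt0 // mxE.
    by have := K1 i; lra.
  split => //; apply: (@Zmx_Mmatrix _ _ Lb xb Hoff Hxb) => i.
  by rewrite LbE entB; have := Hlt i 0; rewrite [X in _ < X]mxE; lra.
- move=> t t0 yb.
  have Hyb : forall i, 0 < yb i 0.
    move=> i; rewrite /yb summxE; case: t t0 {yb} => // t _.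
    rewrite big_ord_recl expr0 mul1mx; apply: (lt_le_trans (Hxb i)); rewrite lerDl.
    apply: sumr_ge0 => k _; apply: nn_mul; first exact: nn_exp.
    by move=> a b; rewrite (ord1 b) ltW.
  split => // Hpos.
  have Z : lambda *: xb - Mb *m xb = x ord_max 0 *: c.
    apply/matrixP => i j; rewrite (ord1 j) entB [RHS]mxE.
    by have := K1 i; lra.
  have Y : lambda *: yb - Mb *m yb = x ord_max 0 *: \sum_(k < t) Mb ^+ k *m c.
    rewrite /yb mulmx_sumr !scaler_sumr -sumrB; apply: eq_bigr => k _.
    have comm : Mb *m Mb ^+ k = Mb ^+ k *m Mb by rewrite -!mulE -exprS exprSr.
    by rewrite mulmxA comm -mulmxA [lambda *: (_ *m _)]scalemxAr -mulmxBr Z -scalemxAr.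
  have Hlt : mx_lt (Mb *m yb) (lambda *: yb).
    move=> i j; rewrite (ord1 j) -subr_gt0.
    have -> : (lambda *: yb) i 0 - (Mb *m yb) i 0 = (lambda *: yb - Mb *m yb) i 0.
      by rewrite !mxE.
    rewrite Y mxE mulr_gt0 //; apply: hit => //.
  split => //; apply: (@Zmx_Mmatrix _ _ Lb yb Hoff Hyb) => i.
  rewrite LbE; have := Hlt i 0.
  move=> h; rewrite entB; move: h; rewrite [X in _ < X]mxE; lra.
Qed.
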